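(* Let $G=(V,E,w)$ be a connected edge-weighted graph with positive rational weights and at least two vertices. A set $S\subseteq V$ is a weighted partial positive influence connected dominating set (WPPICDS) if and only if $f(S)=h_{\max}+\frac{|V|-2}{L}$, where $f=h+c$ and $h_{\max}=\max_{X\subseteq V}h(X)$.
   Context: $N_A(v)=N(v)\cap A$, $W_A(v)=\sum_{u\in N_A(v)}w_{(v,u)}$, $W(v)=W_V(v)$. $h(A)=\sum_{v\in V}h_A(v)$ with $h_A(v)=W(v)/2$ if $v\in A$ or $W_A(v)\ge W(v)/2$, and $h_A(v)=W_A(v)$ otherwise. $L=\max_v l(v)$, where $l(v)$ is the lcm of the denominators of the reduced fractions $W(v)/2$ and of the weights of edges incident to $v$. $p(A)$ is the number of connected components of $G[A]$ ($p(\emptyset)=0$), $q(A)$ the number of connected components of the spanning subgraph $(V,\{e\in E: e\text{ has at least one endpoint in }A\})$, and $c(A)=\frac1L(|V|-q(A)-p(A))$. A WPPICDS is a set $S\subseteq V$ such that every $v\in V\setminus S$ satisfies $W_S(v)\ge W(v)/2$ and $G[S]$ is connected. *)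

(* Defs.v *)
From mathcomp Require Import all_boot all_order all_algebra.
Set Implicit Arguments. Unset Strict Implicit. Unset Printing Implicit Defensive.
Import Order.TTheory GRing.Theory Num.Theory.
Local Open Scope ring_scope.

(* A graph G = (V, E, w): V a finite type, e a symmetric irreflexive
   adjacency relation, w : V -> V -> rat the edge weights (only values on
   edges are meaningful). *)
Section WPPICDS.
Variables (V : finType) (e : rel V) (w : V -> V -> rat).

Definition NA (A : {set V}) (v : V) : {set V} := [set u in A | e v u].
Definition WA (A : {set V}) (v : V) : rat := \sum_(u in NA A v) w v u.
Definition Wt (v : V) : rat := WA [set: V] v.

Definition hA (A : {set V}) (v : V) : rat :=
  if (v \in A) || (Wt v / 2%:R <= WA A v) then Wt v / 2%:R else WA A v.
Definition h (A : {set V}) : rat := \sum_(v : V) hA A v.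

(* h_max = max_{X ⊆ V} h(X)  (h >= 0, so 0 is a harmless seed) *)
Definition hmax : rat := \big[Num.max/0]_(X : {set V}) h X.

Definition lv (v : V) : nat :=
  lcmn `|denq (Wt v / 2%:R)|%N
       (\big[lcmn/1%N]_(u | e v u) `|denq (w v u)|%N).
Definition Lc : nat := \max_(v : V) lv v.

Definition edgeIn (A : {set V}) : rel V :=
  fun x y => [&& e x y, x \in A & y \in A].
Definition p (A : {set V}) : nat :=
  #|[set [set y | connect (edgeIn A) x y] | x in A]|.

(* q(A): number of components of the spanning subgraph (V, {edges with an
   endpoint in A}) *)
Definition edgeTouch (A : {set V}) : rel V :=
  fun x y => e x y && ((x \in A) || (y \in A)).
Definition q (A : {set V}) : nat :=
  #|[set [set y | connect (edgeTouch A) x y] | x : V]|.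

Definition c (A : {set V}) : rat :=
  ((#|V|%:R - (q A)%:R - (p A)%:R) / (Lc%:R)).

Definition f (A : {set V}) : rat := h A + c A.

Definition is_WPPICDS (S : {set V}) : Prop :=
  (forall v, v \notin S -> Wt v / 2%:R <= WA S v) /\
  (forall x y, x \in S -> y \in S -> connect (edgeIn S) x y).

End WPPICDS.

(* Main.v *)
Require Import Defs.
From mathcomp Require Import all_boot all_order all_algebra zify ring lra.
Set Implicit Arguments. Unset Strict Implicit. Unset Printing Implicit Defensive.
Import Order.TTheory GRing.Theory Num.Theory.
Local Open Scope ring_scope.

Lemma den_int (x : rat) (l : nat) : (`|denq x| %| l)%N -> exists z : int, x * l%:R = z%:~R.
Proof.
case/dvdnP=> k ->; exists (numq x * k%:Z).
rewrite -{1}(divq_num_den x) natrM.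
have -> : (`|denq x|%N)%:R = (denq x)%:~R :> rat.
  by rewrite natr_absz ger0_norm // ltW // denq_gt0.
have dn : (denq x)%:~R != 0 :> rat by rewrite intr_eq0 denq_neq0.
rewrite rmorphM /=. field. done.
Qed.

Section S.
Variables (V : finType) (r : rel V) (rsym : symmetric r).
Definition cls x := [set y | connect r x y].
Lemma csym x y : connect r x y = connect r y x.
Proof. exact: (sym_connect_sym rsym). Qed.
Lemma cls_eq x y : connect r x y -> cls x = cls y.
Proof.
move=> cxy; apply/setP=> z; rewrite !inE; apply/idP/idP => H.
  by apply: connect_trans H; rewrite csym.
by apply: connect_trans H.
Qed.
Lemma img_ge2 (A : {pred V}) x y : x \in A -> y \in A -> ~~ connect r x y ->
  (1 < #|[set cls z | z in A]|)%N.
Proof.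
move=> xA yA nc.
have ne : cls x != cls y.
  apply/eqP=> E; have : y \in cls y by rewrite inE connect0.
  by rewrite -E inE (negbTE nc).
have sub : [set cls x; cls y] \subset [set cls z | z in A].
  by apply/subsetP=> s; rewrite !inE => /orP[]/eqP->; apply: imset_f.
by have := subset_leq_card sub; rewrite cards2 ne.
Qed.
Lemma img_ge1 (A : {pred V}) x : x \in A -> (0 < #|[set cls z | z in A]|)%N.
Proof. by move=> xA; apply/card_gt0P; exists (cls x); apply: imset_f. Qed.
Lemma img_1 (A : {pred V}) x0 : x0 \in A ->
  (forall x y, x \in A -> y \in A -> connect r x y) ->
  #|[set cls z | z in A]| = 1%N.
Proof.
move=> x0A H.
suff -> : [set cls z | z in A] = [set cls x0] by rewrite cards1.
apply/setP=> s; rewrite inE; apply/imsetP/eqP.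
  by case=> x xA ->; apply: cls_eq; apply: H.
by move=> ->; exists x0.
Qed.
Lemma img_conn (A : {pred V}) x y : x \in A -> y \in A ->
  #|[set cls z | z in A]| = 1%N -> connect r x y.
Proof.
move=> xA yA E; apply/negPn/negP=> nc.
by have := img_ge2 (A:=A) xA yA nc; rewrite E.
Qed.
End S.

Section Main.
Variables (V : finType) (e : rel V) (w : V -> V -> rat).
Hypotheses (e_sym : symmetric e) (e_irr : irreflexive e)
  (w_pos : forall x y, e x y -> 0 < w x y)
  (G_conn : forall x y, connect e x y)
  (V_ge2 : (2 <= #|V|)%N).

Lemma nbr v : exists u, e v u.
Proof.
have : (0 < #|[set~ v]|)%N by rewrite cardsC1; lia.
case/card_gt0P=> y; rewrite !inE => yv.
case/connectP: (G_conn v y) => [] [|u s] /=.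
  by move=> _ E; rewrite E eqxx in yv.
by case/andP=> evu _ _; exists u.
Qed.

Lemma WA_ge0 (A : {set V}) v : 0 <= WA e w A v.
Proof. by apply: sumr_ge0 => u; rewrite inE => /andP[_ /w_pos/ltW]. Qed.

Lemma Wt_pos v : 0 < Wt e w v.
Proof.
case: (nbr v) => u evu.
rewrite /Wt /WA (bigD1 u) /=; last by rewrite !inE evu.
have h1 := w_pos evu.
have h2 : 0 <= \sum_(i in NA e [set: V] v | i != u) w v i.
  by apply: sumr_ge0 => i; rewrite inE => /andP[/andP[_ /w_pos/ltW]].
lra.
Qed.

Definition dom (A : {set V}) v := (v \in A) || (Wt e w v / 2%:R <= WA e w A v).

Lemma hA_le A v : hA e w A v <= Wt e w v / 2%:R.
Proof.
rewrite /hA; case: ifP => // /negbT; rewrite negb_or => /andP[_].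
by rewrite -ltNge => /ltW.
Qed.

Definition H := \sum_(v : V) Wt e w v / 2%:R.

Lemma h_le A : h e w A <= H.
Proof. by apply: ler_sum => v _; apply: hA_le. Qed.

Lemma h_ge0 A : 0 <= h e w A.
Proof.
apply: sumr_ge0 => v _; rewrite /hA; case: ifP => _; last exact: WA_ge0.
by have := Wt_pos v; lra.
Qed.

Lemma h_dom A : (forall v, dom A v) -> h e w A = H.
Proof. by move=> D; apply: eq_bigr => v _; rewrite /hA -/(dom A v) D. Qed.

Lemma hmax_eq : hmax e w = H.
Proof.
have hT : h e w [set: V] = H by apply: h_dom => v; rewrite /dom inE.
apply/eqP; rewrite eq_le; apply/andP; split.
  rewrite /hmax; elim/big_ind: _ => //; first by have := h_ge0 setT; lra.
    by move=> x y hx hy; rewrite ge_max hx hy.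
  by move=> X _; apply: h_le.
rewrite -hT /hmax.
have : [set: V] \in index_enum {set V} by rewrite mem_index_enum.
elim: (index_enum _) => // X r IH; rewrite inE big_cons => /orP[/eqP <-|/IH].
  by rewrite le_max lexx.
by move=> le; rewrite le_max le orbT.
Qed.

Lemma lv_gt0 v : (0 < lv e w v)%N.
Proof.
rewrite /lv lcmn_gt0; apply/andP; split.
  by rewrite absz_gt0 denq_neq0.
elim/big_ind: _ => //; first by move=> x y hx hy; rewrite lcmn_gt0 hx hy.
by move=> u _; rewrite absz_gt0 denq_neq0.
Qed.

Lemma Lc_gt0 : (0 < Lc e w)%N.
Proof.
have : (0 < #|V|)%N by lia.
case/card_gt0P=> v _; apply: leq_trans (lv_gt0 v) _; exact: leq_bigmax.
Qed.

Definition isint (x : rat) := exists z : int, x = z%:~R.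

Lemma gran A v : ~~ dom A v -> 1 / (Lc e w)%:R <= Wt e w v / 2%:R - WA e w A v.
Proof.
rewrite /dom negb_or -ltNge => /andP[_ lt].
set l := lv e w v.
have i1 : isint (Wt e w v / 2%:R * l%:R).
  by case: (@den_int (Wt e w v / 2%:R) l (dvdn_lcml _ _)) => z ->; exists z.
have i2 : isint (WA e w A v * l%:R).
  rewrite /WA mulr_suml.
  elim/big_ind: _.
  - by exists 0.
  - by move=> x y [a ->] [b ->]; exists (a + b); rewrite rmorphD.
  move=> u; rewrite inE => /andP[_ evu].
  have dv : (`|denq (w v u)| %| l)%N.
    by rewrite /l /lv; apply: dvdn_trans (dvdn_lcmr _ _); apply: biglcmn_sup evu _.
  by case: (den_int dv) => z ->; exists z.
case: i1 i2 => [a Ea] [b Eb].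
have pos : 0 < (a - b)%:~R :> rat.
  rewrite rmorphB /= -Ea -Eb -mulrBl mulr_gt0 //; first by lra.
  by rewrite ltr0n lv_gt0.
have ge1 : 1 <= (a - b)%:~R :> rat.
  rewrite ltr0z in pos; rewrite (_ : 1 = 1%:~R) // ler_int; lia.
rewrite rmorphB /= -Ea -Eb -mulrBl in ge1.
have lL : l%:R <= (Lc e w)%:R :> rat by rewrite ler_nat; exact: leq_bigmax.
have Lp : 0 < (Lc e w)%:R :> rat by rewrite ltr0n Lc_gt0.
rewrite ler_pdivrMr //.
have : 0 < Wt e w v / 2%:R - WA e w A v by lra.
move=> dp; nra.
Qed.

Lemma h_ndom A v : ~~ dom A v -> h e w A <= H - 1 / (Lc e w)%:R.
Proof.
move=> nd; have g := gran nd.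
rewrite /h /H (bigD1 v) //= [X in _ <= X - _](bigD1 v) //=.
have : \sum_(i | i != v) hA e w A i <= \sum_(i | i != v) Wt e w i / 2%:R.
  by apply: ler_sum => i _; apply: hA_le.
have : hA e w A v = WA e w A v.
  by rewrite /hA -/(dom A v) (negbTE nd).
lra.
Qed.

Lemma edgeIn_sym (A : {set V}) : symmetric (edgeIn e A).
Proof. by move=> x y; rewrite /edgeIn e_sym; case: (e y x); case: (x \in A); case: (y \in A). Qed.
Lemma edgeTouch_sym (A : {set V}) : symmetric (edgeTouch e A).
Proof. by move=> x y; rewrite /edgeTouch e_sym orbC. Qed.

Lemma q_ge1 (A : {set V}) : (1 <= q e A)%N.
Proof.
have : (0 < #|V|)%N by lia.
by case/card_gt0P=> v _; apply: (img_ge1 (edgeTouch e A) (A := V) (x := v)).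
Qed.

Lemma p_ge1 (A : {set V}) v : v \in A -> (1 <= p e A)%N.
Proof. by move=> vA; apply: (img_ge1 (edgeIn e A) vA). Qed.

Lemma p0 : p e set0 = 0%N.
Proof.
rewrite /p; apply/eqP; rewrite cards_eq0; apply/eqP/setP=> s.
by rewrite inE; apply/imsetP => -[x]; rewrite inE.
Qed.

Lemma q0 : (2 <= q e set0)%N.
Proof.
have : (0 < #|V|)%N by lia.
case/card_gt0P=> v _.
have : (0 < #|[set~ v]|)%N by rewrite cardsC1; lia.
case/card_gt0P=> y; rewrite !inE => yv.
apply: (img_ge2 (r := edgeTouch e set0) (A := V) (x := v) (y := y)) => //.
apply/negP; case/connectP => -[|z s] /=.
  by move=> _ E; rewrite E eqxx in yv.
by rewrite /edgeTouch !inE andbF.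
Qed.

Lemma pq_ge2 (A : {set V}) : (2 <= p e A + q e A)%N.
Proof.
case: (set_0Vmem A) => [->|[v vA]]; first by rewrite p0 q0.
by have := p_ge1 vA; have := q_ge1 A; lia.
Qed.

Lemma dom_nonempty (A : {set V}) : (forall v, dom A v) -> exists v, v \in A.
Proof.
move=> D; case: (set_0Vmem A) => [E|[v vA]]; last by exists v.
exfalso; have : (0 < #|V|)%N by lia.
case/card_gt0P=> v _; have := D v; rewrite /dom E inE /=.
have -> : WA e w set0 v = 0.
  by rewrite /WA (_ : NA e set0 v = set0) ?big_set0 //; apply/setP=> u; rewrite !inE.
have := Wt_pos v; lra.
Qed.

Lemma q_1 (A : {set V}) : (forall v, dom A v) ->
  (forall x y, x \in A -> y \in A -> connect (edgeIn e A) x y) -> q e A = 1%N.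
Proof.
move=> D C.
have toA : forall x, exists2 s, s \in A & connect (edgeTouch e A) x s.
  move=> x; case xA : (x \in A); first by exists x => //; exact: connect0.
  have := D x; rewrite /dom xA /= => le.
  case: (set_0Vmem (NA e A x)) => [E|[u]].
    by move: le; rewrite /WA E big_set0; have := Wt_pos x; lra.
  rewrite inE => /andP[uA exu]; exists u => //; apply: connect1.
  by rewrite /edgeTouch exu uA orbT.
have sub : forall x y, connect (edgeIn e A) x y -> connect (edgeTouch e A) x y.
  move=> x y; apply: connect_sub => a b; rewrite /edgeIn /edgeTouch => /and3P[eab aA _].
  by apply: connect1; rewrite eab aA.
have : (0 < #|V|)%N by lia.
case/card_gt0P=> v0 _.
apply: (img_1 (edgeTouch_sym A) (A := V) (x0 := v0)) => // x y _ _.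
case: (toA x) => s sA xs; case: (toA y) => t tA yt.
apply: connect_trans xs _; apply: connect_trans (sub _ _ (C s t sA tA)) _.
by rewrite (csym (edgeTouch_sym A)).
Qed.


Lemma main_sec (S : {set V}) : is_WPPICDS e w S <->
  f e w S = hmax e w + (#|V|%:R - 2%:R) / (Lc e w)%:R.
Proof.
have Lp : 0 < (Lc e w)%:R :> rat by rewrite ltr0n Lc_gt0.
have Ln : (Lc e w)%:R != 0 :> rat by rewrite gt_eqF.
rewrite hmax_eq /f /c; split.
- case=> D C.
  have Dd : forall v, dom S v.
    by move=> v; rewrite /dom; case: (boolP (v \in S)) => //= /D.
  case: (dom_nonempty Dd) => v0 v0S.
  have p1 : p e S = 1%N := img_1 (edgeIn_sym S) v0S C.
  have q1 := q_1 Dd C.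
  rewrite h_dom // p1 q1 -addrA -opprD -natrD //.
- move=> E.
  have pq := pq_ge2 S.
  have Dd : forall v, dom S v.
    move=> v; apply/negPn/negP => nd.
    have := h_ndom nd.
    have cle : (((#|V|)%:R - (q e S)%:R - (p e S)%:R) / (Lc e w)%:R : rat)
               <= ((#|V|)%:R - 2%:R) / (Lc e w)%:R.
      rewrite ler_pM2r ?invr_gt0 //.
      have : 2%:R <= (p e S + q e S)%:R :> rat by rewrite ler_nat.
      rewrite natrD; lra.
    have : 0 < 1 / (Lc e w)%:R :> rat by rewrite divr_gt0.
    move: E cle; lra.
  rewrite (h_dom Dd) in E.
  have E2 := addrI _ E.
  have E3 : ((#|V|)%:R - (q e S)%:R - (p e S)%:R) = ((#|V|)%:R - 2%:R) :> rat.
    by have := congr1 (fun x => x * (Lc e w)%:R) E2; rewrite /= !divfK.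
  have E4 : (q e S + p e S)%:R = 2%:R :> rat by rewrite natrD; lra.
  move/eqP: E4; rewrite eqr_nat => /eqP qp.
  case: (dom_nonempty Dd) => v0 v0S.
  have := p_ge1 v0S; have := q_ge1 S => q1 p1.
  have p1' : p e S = 1%N by lia.
  split; first by move=> v vS; have := Dd v; rewrite /dom (negbTE vS).
  by move=> x y xS yS; apply: (img_conn (r := edgeIn e S) (A := S)) p1'.
Qed.
End Main.

Theorem mainTheorem19 (V : finType) (e : rel V) (w : V -> V -> rat)
  (e_sym : symmetric e) (e_irr : irreflexive e)
  (w_sym : forall x y, w x y = w y x)
  (w_pos : forall x y, e x y -> 0 < w x y)
  (G_conn : forall x y, connect e x y)
  (V_ge2 : (2 <= #|V|)%N)
  (S : {set V}) :
  is_WPPICDS e w S <->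
  f e w S = hmax e w + (#|V|%:R - 2%:R) / (Lc e w)%:R.
Proof. exact: main_sec. Qed.
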